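(* Let $\mathscr{S}\subseteq\mathbb{R}$. For each $s\in\mathscr{S}$ let $\{\mathcal{V}(s,t),\ t\in\mathbb{R}^+\}$ be a real-valued stochastic process. Let $\{X_t,\ t\in\mathbb{R}^+\}$ be a real-valued stochastic process with $X_0=0$. For each $s\in\mathscr{S}$ let $\{\mathcal{Z}(s,t),\ t\in\mathbb{R}^+\}$ be a right-continuous supermartingale adapted to the natural filtration generated by $\{\mathcal{V}(s,t),\ t\in\mathbb{R}^+\}$ and $\{X_t,\ t\in\mathbb{R}^+\}$, such that for all $s\in\mathscr{S}$, \[ \mathbb{E}[\mathcal{Z}(s,0)]\le 1\quad\text{and}\quad \exp(sX_t-\mathcal{V}(s,t))\le\mathcal{Z}(s,t)\ \text{ almost surely for all } t\in\mathbb{R}^+. \] Let $\gamma\in\mathbb{R}$ and let $g$ be a real-valued function on $\mathscr{S}$. Then \[ \Pr\Big\{\sup_{t>0}\big[s(X_t-\gamma)-\mathcal{V}(s,t)+g(s)\big]\ge 0\Big\}\le\exp(g(s)-\gamma s)\quad\text{for all } s\in\mathscr{S}. \] In particular: (I) If the infimum of $g(s)-\gamma s$ over $s\in\mathscr{S}$ is attained at $\zeta\in\mathscr{S}$, then $\Pr\{\sup_{t>0}[\zeta(X_t-\gamma)-\mathcal{V}(\zeta,t)+g(\zeta)]\ge0\}\le\exp(g(\zeta)-\gamma\zeta)$. (II) If $\mathcal{V}(s,t)$ is a deterministic function of $s\in\mathscr{S}$ and $t\in\mathbb{R}^+$, then $\Pr\{\sup_{t>0}[s(X_t-\gamma)-\mathcal{V}(s,t)+\mathcal{V}(s,\tau)]\ge0\}\le\exp(\mathcal{V}(s,\tau)-\gamma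 s)$ for all $s\in\mathscr{S}$ and $\tau\in\mathbb{R}^+$. (III) If $\mathcal{V}(s,t)=\varphi(s)V_t+\ln C$, where $C>0$ is a constant, $\varphi$ is a deterministic function on $\mathscr{S}$, and $\{V_t,\ t\in\mathbb{R}^+\}$ is a deterministic or stochastic process, then $\Pr\{\sup_{t>0}[s(X_t-\gamma)-\varphi(s)(V_t-m)]\ge0\}\le C\exp(m\varphi(s)-\gamma s)$ for all $s\in\mathscr{S}$ and $m\in\mathbb{R}$.
   Context: $\mathbb{R}^+$ denotes the set of nonnegative real numbers. *)

(* Defs.v *)
From HB Require Import structures.
From mathcomp Require Import all_boot all_order all_algebra.
From mathcomp Require Import all_classical all_reals all_analysis.
Set Implicit Arguments. Unset Strict Implicit. Unset Printing Implicit Defensive.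
Import Order.TTheory GRing.Theory Num.Theory.
Import numFieldNormedType.Exports.
Local Open Scope classical_set_scope.
Local Open Scope ring_scope.

(* Time index R^+ is represented by t : R with 0 <= t; processes are
   functions R -> T -> R (time first, then sample point). *)

Section Defs.
Context (d : measure_display) (T : measurableType d) (R : realType).

Definition natural_filtration (Y X : R -> T -> R) (t : R) : set (set T) :=
  <<s [set A | exists u, (0 <= u <= t) /\ exists B : set R, measurable B /\
          (A = Y u @^-1` B \/ A = X u @^-1` B)] >>.

Definition adapted (F : R -> set (set T)) (Z : R -> T -> R) : Prop :=
  forall t, 0 <= t -> forall B : set R, measurable B -> F t (Z t @^-1` B).

(* Supermartingale w.r.t. F under P (conditional expectation is not in the
   library; we use its defining property: for u <= t and A in F_u,
   E[Z_t 1_A] <= E[Z_u 1_A]). *)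
Definition supermartingale (P : probability T R) (F : R -> set (set T))
    (Z : R -> T -> R) : Prop :=
  adapted F Z /\
  (forall t, 0 <= t -> P.-integrable setT (fun x => (Z t x)%:E)) /\
  (forall u t, 0 <= u -> u <= t -> forall A, F u A ->
     (\int[P]_(x in A) (Z t x)%:E <= \int[P]_(x in A) (Z u x)%:E)%E).

Definition right_continuous_paths (Z : R -> T -> R) : Prop :=
  forall x t, 0 <= t -> (fun u => Z u x) @ t^'+ --> Z t x.

Definition sup_event (f : R -> T -> R) : set T :=
  [set x | (0 <= ereal_sup [set (f t x)%:E | t in [set t : R | (0 < t)%R]])%E].

(* "Pr(E) <= b", for a possibly non-measurable event E: E is contained in a
   measurable event of probability at most b (outer probability bound). *)
Definition prob_le (P : probability T R) (E : set T) (b : R) : Prop :=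
  exists M, measurable M /\ E `<=` M /\ (P M <= b%:E)%E.

End Defs.

(* Main.v *)
Require Import Defs.
From HB Require Import structures.
From mathcomp Require Import all_boot all_order all_algebra.
From mathcomp Require Import all_classical all_reals all_analysis.
From mathcomp Require Import measurable_realfun lra zify ring.
Set Implicit Arguments. Unset Strict Implicit. Unset Printing Implicit Defensive.

Import Order.TTheory GRing.Theory Num.Theory.
Import numFieldNormedType.Exports.
Local Open Scope classical_set_scope.
Local Open Scope ring_scope.

Section Grid.
Context (R : realType).
Definition grid (N : nat) : seq R :=
  [seq (k%:R / (2 ^ N)%:R : R) | k <- iota 1 (N * 2 ^ N)].

Lemma grid_path N : path <=%R 0 (grid N).
Proof.
pose f := fun k : nat => (k%:R / (2 ^ N)%:R : R).
have -> : (0 : R) = f 0%N by rewrite /f mul0r.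
rewrite /grid -/f path_map.
apply: (@sub_path _ ltn); last exact: (iota_ltn_sorted 0 (N * 2 ^ N).+1).
move=> i j /= /ltnW ij; apply: ler_wpM2r; first by rewrite invr_ge0.
by rewrite ler_nat.
Qed.

Lemma grid_ge0 N : all (fun t => 0 <= t) (grid N).
Proof.
apply/allP => t /mapP[k _ ->]; by rewrite divr_ge0.
Qed.

Lemma grid_mono N M : (N <= M)%N -> {subset grid N <= grid M}.
Proof.
move=> NM t /mapP[k]; rewrite mem_iota => /andP[k1 kN] ->.
apply/mapP; exists (k * 2 ^ (M - N))%N.
  rewrite mem_iota muln_gt0 k1 expn_gt0 /= add1n ltnS.
  rewrite add1n ltnS in kN.
  have -> : (M * 2 ^ M = (M * 2 ^ N) * 2 ^ (M - N))%N by rewrite -mulnA -expnD subnKC.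
  apply: leq_mul => //; apply: leq_trans kN _; exact: leq_mul.
have eM : (2 ^ M = 2 ^ N * 2 ^ (M - N))%N by rewrite -expnD subnKC.
rewrite natrM eM natrM invfM mulrACA divff ?mulr1 //.

Qed.


Lemma right_ball (f : R -> R) t a : f u @[u --> t^'+] --> f t -> a < f t ->
  exists2 e : R, 0 < e & forall u, t < u < t + e -> a < f u.
Proof.
move=> h ha. have H := cvgr_gt _ h _ ha.
have [e /= e0 He] := (nbhs_ballP _ _).1 (H _).
exists e => // u /andP[tu ue]. apply: He => //=.
rewrite -ball_normE /= ltr_norml; apply/andP; split; lra.
Qed.

Lemma approx (T : Type) (Z : R -> T -> R) x t a : (fun u => Z u x) @ t^'+ --> Z t x -> 0 < t -> a < Z t x ->
  exists N, has (fun u => a <= Z u x) (grid N).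
Proof.
move=> hrc t0 ha.
have [e e0 He] := right_ball hrc ha.
pose N := (Num.truncn t + Num.truncn (e^-1) + 2)%N.
have tN : t + 1 < N%:R.
  have := truncnS_gt t; rewrite /N !natrD; move: (ler0n R (Num.truncn (e^-1))).
  rewrite -addn1 natrD. lra.
have eN : e^-1 < (2 ^ N)%:R.
  apply: (lt_le_trans (truncnS_gt _)); rewrite ler_nat.
  have h1 : (Num.truncn e^-1 < N)%N by rewrite /N; lia.
  exact: leq_trans h1 (ltnW (ltn_expl N (ltnSn 1))).
have p0 : (0 : R) < (2 ^ N)%:R by rewrite ltr0n expn_gt0.
pose k := (Num.truncn (t * (2 ^ N)%:R)).+1.
have kge : t * (2 ^ N)%:R < k%:R by exact: truncnS_gt.
have kle : k%:R <= t * (2 ^ N)%:R + 1.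
  rewrite /k -addn1 natrD lerD2r truncn_le; apply: mulr_ge0; [exact: ltW|exact: ltW].
exists N; apply/hasP; exists (k%:R / (2 ^ N)%:R).
  apply/mapP; exists k => //; rewrite mem_iota /= add1n ltnS.
  rewrite -(ler_nat R) natrM.
  apply: (le_trans kle).
  have : t * (2 ^ N)%:R + (2 ^ N)%:R < N%:R * (2 ^ N)%:R.
    by rewrite -[X in _ + X]mul1r -mulrDl ltr_pM2r //.
  have h1 : 1 <= (2 ^ N)%:R :> R by rewrite ler1n expn_gt0.
  by move=> h2; apply/ltW/(le_lt_trans _ h2); rewrite lerD2l.
apply: ltW; apply: He; apply/andP; split.
  by rewrite ltr_pdivlMr.
rewrite ltr_pdivrMr // mulrDl.
apply: (le_lt_trans kle); rewrite ltrD2l.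
by rewrite -ltr_pdivrMl // mulr1.
Qed.

End Grid.
Arguments grid {R}.
Arguments grid_path {R}.
Arguments grid_ge0 {R}.
Arguments grid_mono {R}.

Section Disc.
Context (d : measure_display) (T : measurableType d) (R : realType).
Variables (P : probability T R) (F : R -> set (set T)) (Z : R -> T -> R).
Hypothesis hFm : forall t : R, 0 <= t -> forall A, F t A -> measurable A.
Hypothesis hFI : forall t A B, F t A -> F t B -> F t (A `&` B).
Hypothesis hFmono : forall u t : R, 0 <= u -> u <= t -> forall A, F u A -> F t A.
Hypothesis hZad : forall t : R, 0 <= t -> forall B : set R, measurable B -> F t (Z t @^-1` B).
Hypothesis hsup : forall u t : R, 0 <= u -> u <= t -> forall A, F u A ->
     (\int[P]_(x in A) (Z t x)%:E <= \int[P]_(x in A) (Z u x)%:E)%E.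
Hypothesis hnn : {ae P, forall x, forall t : R, 0 <= t -> 0 <= Z t x}.

Lemma Zmeas (t : R) : 0 <= t -> measurable_fun setT (Z t).
Proof.
move=> t0 _ B mB; rewrite setTI; exact: hFm (hZad t0 mB).
Qed.

Lemma ZEmeas (t : R) (D : set T) : 0 <= t -> measurable_fun D (@EFin R \o Z t).
Proof.
move=> t0; apply/measurable_EFinP; apply: measurable_funS (Zmeas t0) => //.
Qed.

Lemma int_nn (t : R) (B : set T) : 0 <= t -> measurable B -> (0 <= \int[P]_(x in B) (Z t x)%:E)%E.
Proof.
move=> t0 mB.
rewrite (ae_eq_integral (fun x => (Num.max (Z t x) 0)%:E)) //.
- by apply: integral_ge0 => x _; rewrite lee_fin le_max lexx orbT.
- exact: ZEmeas.
- apply/measurable_EFinP; apply: measurable_maxr; last exact: measurable_cst.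
  apply: measurable_funS (Zmeas t0) => //.
- apply: filterS hnn => x /(_ t t0) h _.
  by rewrite /= (max_idPl h).
Qed.


Definition Hs (c : R) (us : seq R) := [set x | has (fun t => c <= Z t x) us].

Lemma Hs_meas c us : all (fun t => 0 <= t) us -> measurable (Hs c us).
Proof.
elim: us => [|u us IH] /=.
  by move=> _; have -> : Hs c [::] = set0 by apply/seteqP; split => x.
move=> /andP[u0 hus].
have -> : Hs c (u :: us) = (Z u @^-1` `[c, +oo[) `|` Hs c us.
  by apply/seteqP; split => x /=; rewrite /Hs /= in_itv /= andbT => /orP.
apply: measurableU; last exact: IH.
exact: hFm (hZad u0 (measurable_itv _)).
Qed.

Lemma common (c : R) u0 B : 0 < c -> 0 <= u0 -> F u0 B ->
  let B1 := (B `&` Z u0 @^-1` `[c, +oo[) in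
  let B2 := (B `&` Z u0 @^-1` `]-oo, c[) in
  (F u0 B1 /\ F u0 B2 /\
   (\int[P]_(x in B) (Z u0 x)%:E = \int[P]_(x in B1) (Z u0 x)%:E + \int[P]_(x in B2) (Z u0 x)%:E)%E
   /\ (c%:E * P B1 <= \int[P]_(x in B1) (Z u0 x)%:E)%E).
Proof.
move=> c0 u00 FB B1 B2.
have FB1 : F u0 B1 by apply: hFI FB (hZad u00 (measurable_itv _)).
have FB2 : F u0 B2 by apply: hFI FB (hZad u00 (measurable_itv _)).
have mB1 := hFm u00 FB1.
have mB2 := hFm u00 FB2.
have eB : B = B1 `|` B2.
  rewrite /B1 /B2; apply/seteqP; split => x /=; rewrite ?in_itv /= ?andbT.
    by case: (leP c (Z u0 x)) => h Bx; [left|right].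
  by case => -[].
split => //; split => //; split.
  rewrite {1}eB; apply: integral_setU => //; first exact: ZEmeas.
  apply/disj_setPS => x; rewrite /B1 /B2 /= !in_itv /= ?andbT.
  by move=> [[_ h1] [_ h2]]; move: (le_lt_trans h1 h2); rewrite ltxx.
rewrite -integral_cst //; apply: ge0_le_integral => //.
- by move=> x _; rewrite lee_fin ltW.
- exact: ZEmeas.
- by move=> x [_] /=; rewrite in_itv /= andbT lee_fin.
Qed.

Lemma disc (c : R) : 0 < c -> forall us u0 B, 0 <= u0 -> path <=%R u0 us -> F u0 B ->
 (c%:E * P (B `&` Hs c (u0 :: us)) <= \int[P]_(x in B) (Z u0 x)%:E)%E.
Proof.
move=> c0; elim => [|u1 us IH] u0 B u00 pth FB.
all: have [FB1 [FB2 [intB base]]] := common c0 u00 FB.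
all: set B1 := (B `&` Z u0 @^-1` `[c, +oo[) in FB1 intB base *.
all: set B2 := (B `&` Z u0 @^-1` `]-oo, c[) in FB2 intB *.
all: have mB1 := hFm u00 FB1.
all: have mB2 := hFm u00 FB2.
- apply: (le_trans base); rewrite intB; apply: leeDl.
  exact: int_nn.
- have -> : B `&` Hs c [:: u0, u1 & us] = B1 `|` (B2 `&` Hs c (u1 :: us)).
    rewrite /B1 /B2 /Hs; apply/seteqP; split => x /=; rewrite ?in_itv /= ?andbT.
      move=> [Bx /orP[h|h]]; first by left.
      by case: (leP c (Z u0 x)) => h'; [left|right].
    case=> [[Bx h]|[[Bx _] h]]; split => //; first by rewrite h.
    by apply/orP; right.
  move: pth => /= /andP[u01 pth].
  have u10 : 0 <= u1 by apply: le_trans u01.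
  have mH : measurable (Hs c (u1 :: us)).
    apply: Hs_meas => /=; rewrite u10 /=.
    apply/allP => t tin; apply: le_trans u10 _.
    have := order_path_min (@le_trans _ _) pth.
    by move=> /allP; apply.
  have mBH : measurable (B2 `&` Hs c (u1 :: us)) by exact: measurableI.
  have dj : B1 `&` (B2 `&` Hs c (u1 :: us)) = set0.
    rewrite /B1 /B2; apply/seteqP; split => x //= [[_ h1] [[_ h2] _]]; move: h1 h2.
    rewrite ?in_itv /= ?andbT => h1 h2; by move: (le_lt_trans h1 h2); rewrite ltxx.
  rewrite measureU //.
  rewrite ge0_muleDr // intB; apply: leeD => //.
  apply: le_trans (IH u1 B2 u10 pth (hFmono u00 u01 FB2)) _.
  exact: hsup.
Qed.



Hypothesis hFT : F 0 setT.
Hypothesis hZ0 : (\int[P]_x (Z 0 x)%:E <= 1)%E.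

Let HG a N := Hs a (0 :: grid N).

Lemma HG_meas a N : measurable (HG a N).
Proof. by apply: Hs_meas => /=; rewrite lexx grid_ge0. Qed.

Lemma grid_bound a N : 0 < a -> (P (HG a N) <= (a^-1)%:E)%E.
Proof.
move=> a0.
have := disc a0 (lexx 0) (grid_path N) hFT; rewrite setTI => h.
rewrite -[X in (_ <= X)%E]mule1 lee_pdivlMl //; apply: le_trans h _; exact: hZ0.
Qed.

Lemma HG_mono a : {homo HG a : n m / (n <= m)%N >-> (n <= m)%O}.
Proof.
move=> n m nm; apply/subsetPset => x /hasP[t tin h]; apply/hasP; exists t => //.
move: tin; rewrite !inE => /orP[->//|tin]; apply/orP; right; exact: grid_mono tin.
Qed.

Lemma union_bound a : 0 < a -> (P (\bigcup_N HG a N) <= (a^-1)%:E)%E.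
Proof.
move=> a0.
have mU : measurable (\bigcup_N HG a N) by apply: bigcupT_measurable => N; exact: HG_meas.
have h := nondecreasing_cvg_mu (mu := P) (fun N => HG_meas a N) mU (@HG_mono a).
rewrite -(cvg_lim (@ereal_hausdorff R) h).
apply: lime_le; first by apply/cvg_ex; eexists; exact: h.
by apply: nearW => N; exact: grid_bound.
Qed.


Hypothesis hrc : forall x (t : R), 0 <= t -> (fun u => Z u x) @ t^'+ --> Z t x.

Lemma ville c : 0 < c -> exists M, measurable M /\ (P M <= (c^-1)%:E)%E /\
  forall x, (forall a, 0 < a -> a < c -> exists t, 0 < t /\ a < Z t x) -> M x.
Proof.
move=> c0.
pose a m := c * (1 - (m.+2%:R)^-1).
have i1 m : (m.+2%:R : R)^-1 < 1 by rewrite invf_lt1 // ltr1n.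
have a0 m : 0 < a m by rewrite mulr_gt0 // subr_gt0.
have ac m : a m < c by rewrite -[ltRHS]mulr1 ltr_pM2l // ltrBlDr ltrDl invr_gt0.
exists (\bigcap_m \bigcup_N HG (a m) N); split; [|split].
- apply: bigcapT_measurable => m; apply: bigcupT_measurable => N; exact: HG_meas.
- apply/lee_mul01Pr; first exact: measure_ge0.
  move=> r /andP[r0 r1].
  pose m := Num.truncn ((1 - r)^-1).
  have hm : r < 1 - (m.+2%:R)^-1.
    have h1 : (1 - r)^-1 < m.+2%:R.
      apply: lt_le_trans (truncnS_gt _) _; by rewrite ler_nat.
    have h2 : (m.+2%:R : R)^-1 < 1 - r.
      rewrite -[X in _ < X]invrK ltf_pV2 // ?posrE ?invr_gt0 ?subr_gt0 //.
    by move: h2; rewrite ltrBrDl ltrBrDr addrC.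
  have mU : measurable (\bigcup_N HG (a m) N).
    by apply: bigcupT_measurable => N; exact: HG_meas.
  apply: (@le_trans _ _ (r%:E * P (\bigcup_N HG (a m) N))%E).
    apply: lee_wpmul2l; first by rewrite lee_fin ltW.
    apply: le_measure; rewrite ?inE //.
      by apply: bigcapT_measurable => m'; apply: bigcupT_measurable => N; exact: HG_meas.
    by move=> x /(_ m I).
  apply: le_trans (lee_wpmul2l _ (union_bound (a0 m))) _; first by rewrite lee_fin ltW.
  rewrite -EFinM lee_fin ler_pdivrMr // /a mulrA mulVf ?gt_eqF // mul1r.
  exact: ltW.
- move=> x hx m _; have [t [t0 ht]] := hx (a m) (a0 m) (ac m).
  have [N hN] := approx (@hrc x t (ltW t0)) t0 ht.
  by exists N => //; rewrite /HG /Hs /= hN orbT.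
Qed.

End Disc.
Section Main.
Context (d : measure_display) (T : measurableType d) (R : realType).

Lemma main_bound (P : probability T R) (V : R -> T -> R) (X : R -> T -> R) (Z : R -> T -> R) (s : R)
  (hV : forall t, 0 <= t -> measurable_fun setT (V t))
  (hX : forall t, 0 <= t -> measurable_fun setT (X t))
  (hZ : right_continuous_paths Z /\ supermartingale P (natural_filtration V X) Z)
  (hZ0 : (\int[P]_x (Z 0 x)%:E <= 1)%E)
  (hae : {ae P, forall x, forall t, 0 <= t -> expR (s * X t x - V t x) <= Z t x})
  (gamma b : R) :
  prob_le P (sup_event (fun t x => s * (X t x - gamma) - V t x + b)) (expR (b - gamma * s)).
Proof.
set F := natural_filtration V X.
have hFm : forall t : R, 0 <= t -> forall A, F t A -> measurable A.
  move=> t t0 A; apply: smallest_sub; first exact: sigma_algebra_measurable.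
  move=> B [u [/andP[u0 _] [C [mC [->|->]]]]].
    by have := hV u u0 measurableT _ mC; rewrite setTI.
  by have := hX u u0 measurableT _ mC; rewrite setTI.
have hFI : forall (t : R) A B, F t A -> F t B -> F t (A `&` B).
  move=> t A B hA hB; apply: (@measurableI _ (g_sigma_algebraType _)); [exact: hA|exact: hB].
have hFmono : forall u t : R, 0 <= u -> u <= t -> forall A, F u A -> F t A.
  move=> u t u0 ut; rewrite /F /natural_filtration; apply: sub_sigma_algebra2 => B [w [/andP[w0 wu] hB]].
  by exists w; split => //; apply/andP; split => //; exact: le_trans ut.
have hFT : F 0 setT by exact: (@measurableT _ (g_sigma_algebraType _)).
have [hrc hsm] := hZ; have [hZad [_ hsup]] := hsm.
have hnn : {ae P, forall x, forall t : R, 0 <= t -> 0 <= Z t x}.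
  by apply: filterS hae => x h t t0; exact: le_trans (ltW (expR_gt0 _)) (h t t0).
have c0 := expR_gt0 (gamma * s - b).
have [M [mM [PM HM]]] := ville hFm hFI hFmono hZad hsup hnn hFT hZ0 hrc c0.
case: hae => N0 [mN0 PN0 sN0].
exists (N0 `|` M); split; first exact: measurableU.
split; last first.
  have h0 : (P N0 <= 0)%E by rewrite le_eqVlt; apply/orP; left; apply/eqP; exact: PN0.
  apply: le_trans (measureU2 P mN0 mM) _; apply: le_trans (leeD h0 PM) _; rewrite add0e.
  by rewrite lee_fin -expRN opprB.
move=> x Ex; case: (pselect (N0 x)) => [?|nN]; [by left|right].
have good : forall t : R, 0 <= t -> expR (s * X t x - V t x) <= Z t x.
  apply: contrapT => ng; apply: nN; exact: sN0.
apply: HM => a a0 ac.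
apply: contrapT => hn.
have hla : ln a < gamma * s - b.
  by rewrite -[X in _ < X]expRK ltr_ln // posrE expR_gt0.
have hle : forall t : R, 0 < t ->
    ((s * (X t x - gamma) - V t x + b)%:E <= (ln a - (gamma * s - b))%:E)%E.
  move=> t t0; rewrite lee_fin.
  have hz : Z t x <= a by rewrite leNgt; apply/negP => h; apply: hn; exists t.
  have h1 : s * X t x - V t x <= ln a.
    rewrite -[X in X <= _]expRK ler_ln ?posrE ?expR_gt0 //.
    exact: le_trans (good t (ltW t0)) hz.
  have -> : s * (X t x - gamma) - V t x + b = (s * X t x - V t x) - (gamma * s - b) by ring.
  by rewrite lerD2r.
move: Ex; rewrite /sup_event /= => Ex.
have : (0 <= (ln a - (gamma * s - b))%:E)%E.
  by apply: le_trans Ex _; apply: ge_ereal_sup => _ [t t0 <-]; exact: hle.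
rewrite lee_fin subr_ge0 leNgt hla.
by [].
Qed.

End Main.

Unset Implicit Arguments.

Theorem theorem10 (d : measure_display) (T : measurableType d) (R : realType)
  (P : probability T R) (S : set R)
  (V : R -> R -> T -> R) (X : R -> T -> R) (Z : R -> R -> T -> R) :
  (* V(s,.) and X are real-valued stochastic processes *)
  (forall s, S s -> forall t, 0 <= t -> measurable_fun setT (V s t)) ->
  (forall t, 0 <= t -> measurable_fun setT (X t)) ->
  (forall x, X 0 x = 0) ->
  (* Z(s,.) is a right-continuous supermartingale w.r.t. the natural
     filtration of V(s,.) and X *)
  (forall s, S s -> right_continuous_paths (Z s) /\
     supermartingale P (natural_filtration (V s) X) (Z s)) ->
  (forall s, S s -> (\int[P]_x (Z s 0 x)%:E <= 1)%E) ->
  (forall s, S s -> {ae P, forall x, forall t, 0 <= t ->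
       expR (s * X t x - V s t x) <= Z s t x}) ->
  forall (gamma : R) (g : R -> R),
  (* main bound *)
  (forall s, S s ->
     prob_le P (sup_event (fun t x => s * (X t x - gamma) - V s t x + g s))
       (expR (g s - gamma * s))) /\
  (* (I) *)
  (forall zeta, S zeta ->
     (forall s, S s -> g zeta - gamma * zeta <= g s - gamma * s) ->
     prob_le P
       (sup_event (fun t x => zeta * (X t x - gamma) - V zeta t x + g zeta))
       (expR (g zeta - gamma * zeta))) /\
  (* (II) *)
  (forall v : R -> R -> R, (forall s t x, V s t x = v s t) ->
     forall s, S s -> forall tau, 0 <= tau ->
     prob_le P
       (sup_event (fun t x => s * (X t x - gamma) - V s t x + V s tau x))
       (expR (v s tau - gamma * s))) /\
  (* (III) *)
  (forall (C : R) (phi : R -> R) (Vp : R -> T -> R), 0 < C ->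
     (forall s t x, V s t x = phi s * Vp t x + ln C) ->
     forall s, S s -> forall m : R,
     prob_le P
       (sup_event (fun t x => s * (X t x - gamma) - phi s * (Vp t x - m)))
       (C * expR (m * phi s - gamma * s))).
Proof.
Proof.
move=> hV hX hX0 hZ hZ0 hae gamma g.
have mb := fun s (sS : S s) b => main_bound (hV s sS) hX (hZ s sS) (hZ0 s sS) (hae s sS) gamma b.
split; [|split; [|split]].
- by move=> s sS; exact: mb.
- by move=> zeta zS _; exact: mb.
- move=> v hv s sS tau tau0.
  have -> : (fun t x => s * (X t x - gamma) - V s t x + V s tau x) =
            (fun t x => s * (X t x - gamma) - V s t x + v s tau).
    by apply: funext => t; apply: funext => x; rewrite (hv s tau x).
  exact: mb.
- move=> C phi Vp C0 hVp s sS m.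
  have -> : (fun t x => s * (X t x - gamma) - phi s * (Vp t x - m)) =
            (fun t x => s * (X t x - gamma) - V s t x + (ln C + m * phi s)).
    by apply: funext => t; apply: funext => x; rewrite hVp; ring.
  have -> : C * expR (m * phi s - gamma * s) = expR (ln C + m * phi s - gamma * s).
    by rewrite -addrA [in RHS]expRD lnK // posrE.
  exact: mb.
Qed.
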